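(* Let $m \ge 3$ and $n \ge 2$ be integers, and let $k \ge 1$ be the integer with $k^2 \le n < (k+1)^2$, so that $n = k^2 + h$ with $0 \le h \le 2k$. Then $\mathrm{sg_e}(P_n \,\square\, K_m) = mk$ if $h = 0$; $\mathrm{sg_e}(P_n \,\square\, K_m) = mk + (m-1)$ if $1 \le h \le k$; and $\mathrm{sg_e}(P_n \,\square\, K_m) = mk + m$ if $k+1 \le h \le 2k$. In particular, $\mathrm{sg_e}(P_2 \,\square\, K_m) = 2m-1$ for $m\ge 3$.
   Context: All graphs are finite, simple and connected. $P_n$ is the path on $n$ vertices and $K_m$ the complete graph on $m$ vertices. The Cartesian product $G \,\square\, H$ has vertex set $V(G)\times V(H)$, with $(g,h)$ adjacent to $(g',h')$ iff either $g=g'$ and $hh' \in E(H)$, or $h=h'$ and $gg' \in E(G)$. A set $S \subseteq V(G)$ is a strong edge geodetic set of $G$ if one can assign to every unordered pair $\{u,v\}$ of distinct vertices of $S$ either one shortest $u,v$-path $P_{uv}$ in $G$ or no path, in such a way that every edge of $G$ lies on at least one of the assigned paths. The strong edge geodetic number $\mathrm{sg_e}(G)$ is the minimum cardinality of a strong edge geodetic set of $G$. *)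

(* Defs.v *)
From mathcomp Require Import all_boot all_order.
Set Implicit Arguments. Unset Strict Implicit. Unset Printing Implicit Defensive.

(* A simple graph is a symmetric irreflexive relation [e] on a finite type. *)

Definition path_graph (n : nat) : rel 'I_n :=
  fun i j => (i.+1 == j :> nat) || (j.+1 == i :> nat).

Arguments path_graph n : clear implicits.

Definition complete_graph (m : nat) : rel 'I_m := fun i j => i != j.

Arguments complete_graph m : clear implicits.

Definition cart_prod (T1 T2 : finType) (e1 : rel T1) (e2 : rel T2)
  : rel (T1 * T2) :=
  fun x y => ((x.1 == y.1) && e2 x.2 y.2) || ((x.2 == y.2) && e1 x.1 y.1).

(* A u,v-walk is represented by the vertex sequence u :: p, where
   [path e u p] and [last u p = v]; its length is [size p]. *)
Definition is_walk (T : finType) (e : rel T) (u v : T) (p : seq T) : Prop :=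
  path e u p /\ last u p = v.

Definition is_shortest_path (T : finType) (e : rel T) (u v : T) (p : seq T)
  : Prop :=
  is_walk e u v p /\ forall q, is_walk e u v q -> size p <= size q.

Definition edge_on (T : finType) (u : T) (p : seq T) (x y : T) : bool :=
  ((x, y) \in zip (u :: p) p) || ((y, x) \in zip (u :: p) p).

(* Strong edge geodetic set: an assignment, to every unordered pair {u,v}
   of distinct vertices of S (represented by the ordered pair with
   enum_rank u < enum_rank v), of either one shortest u,v-path or no path,
   such that every edge of G lies on some assigned path. *)
Definition strong_edge_geodetic (T : finType) (e : rel T) (S : {set T})
  : Prop :=
  exists f : T -> T -> option (seq T),
    (forall u v p, u \in S -> v \in S -> (enum_rank u < enum_rank v)%N ->
        f u v = Some p -> is_shortest_path e u v p) /\
    (forall x y, e x y ->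
       exists u v p, [/\ u \in S, v \in S, (enum_rank u < enum_rank v)%N,
                         f u v = Some p & edge_on u p x y]).

Definition sge_number (T : finType) (e : rel T) (N : nat) : Prop :=
  (exists S : {set T}, strong_edge_geodetic e S /\ #|S| = N) /\
  (forall S : {set T}, strong_edge_geodetic e S -> N <= #|S|).

(* Main.v *)
Require Import Defs.
From mathcomp Require Import all_boot all_order.
From mathcomp Require Import zify.
Set Implicit Arguments. Unset Strict Implicit. Unset Printing Implicit Defensive.


Definition Lf (k h sc : nat) : nat :=
  if k < sc then k.+1 else (k - sc) + k + (0 < h) + (k < h).

Lemma Lbound k h sc x : 1 <= k -> h <= 2 * k -> sc <= x ->
  k ^ 2 + h <= sc * x -> Lf k h sc <= x.
Proof.
move=> hk hh hx hn; rewrite /Lf; case: ltnP => hs; first by lia.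
case: (posnP h) => h0; case: (ltnP k h) => h1 /=.
- lia.
- rewrite h0 in hn; rewrite !addn0; apply/negPn/negP; rewrite -ltnNge => hlt.
  have : sc * x <= sc * (k - sc + k).-1 by rewrite leq_mul2l -ltnS; lia.
  nia.
- apply/negPn/negP; rewrite -ltnNge => hlt.
  have : sc * x <= sc * (k - sc + k + 1) by rewrite leq_mul2l; lia.
  nia.
- apply/negPn/negP; rewrite -ltnNge => hlt.
  have : sc * x <= sc * (k - sc + k) by rewrite leq_mul2l; lia.
  nia.
Qed.

Lemma target_le m k h sc T : 3 <= m -> 1 <= k -> h <= 2 * k ->
  (h = 0 -> T = m * k) -> (1 <= h <= k -> T = m * k + (m - 1)) ->
  (k.+1 <= h -> T = m * k + m) ->
  T <= sc + (m - 1) * Lf k h sc.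
Proof.
case: m => [//|m'] hm hk hh T0 T1 T2; rewrite subSS subn0 in T1 *; rewrite /Lf.
have [hs|hs] := ltnP k sc.
  have [h0|h0] := posnP h; first by rewrite T0 //; nia.
  have [h1|h1] := leqP h k; first by rewrite T1 ?h0 ?h1 //; nia.
  by rewrite T2 //; nia.
have [h0|h0] := posnP h; first by rewrite T0 //= h0; nia.
have [h1|h1] := leqP h k.
  rewrite T1; last by rewrite h0 h1.
  nia.
rewrite T2 //=; nia.
Qed.

Definition betw (t i j : nat) := minn i j <= t <= maxn i j.

Definition Iidx (s p r : nat) : nat * nat :=
  if r == 0 then (p, p) else if r <= s.-1 - p then (p, p + r) else (p.+1, r - (s - p)).

Lemma Iidx_inj s p1 r1 p2 r2 : p1 < s -> p2 < s -> (p1 = s.-1 -> r1 = 0) ->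
  (p2 = s.-1 -> r2 = 0) -> r1 <= s -> r2 <= s ->
  Iidx s p1 r1 = Iidx s p2 r2 -> p1 = p2 /\ r1 = r2.
Proof.
move=> hp1 hp2 hr1 hr2 hs1 hs2; rewrite /Iidx.
case: (r1 =P 0) => h1; case: (r2 =P 0) => h2;
case: (leqP r1 (s.-1 - p1)) => h3; case: (leqP r2 (s.-1 - p2)) => h4;
move=> [e1 e2]; try lia.
all: have := hr1; have := hr2; lia.
Qed.

Section Scheme.
Variables s d N : nat.
Hypothesis hs : 1 <= s.
Hypothesis hd1 : 1 <= d.
Hypothesis hd2 : d <= s.+1.
Hypothesis hN1 : 1 <= N.
Hypothesis hNd : N.-1 <= s.-1 * d.
Hypothesis hlast : 2 <= s -> (s - 2) * d < N.-1 /\ N.-1 - (s - 2) * d <= s.+1.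
Hypothesis hs1 : s = 1 -> N = 1.

Definition xpos p := if p < s.-1 then p * d else N.-1.
Definition seg t := if t == N.-1 then s.-1 else t %/ d.
Definition sidx t := Iidx s (seg t) (t - xpos (seg t)).
Definition spsi t := (xpos (sidx t).1, xpos (sidx t).2).

Lemma xpos_lt p : p < s -> xpos p < N.
Proof.
move=> hp; rewrite /xpos; case: (ltnP p s.-1) => h; last by lia.
have [h1 h2] := hlast ltac:(lia).
have : p * d <= (s - 2) * d by rewrite leq_mul2r; lia.
lia.
Qed.

Lemma xpos_mono p q : p <= q -> q < s -> xpos p + (q - p) <= xpos q.
Proof.
move=> hpq hq; rewrite /xpos.
case: (ltnP q s.-1) => h2; case: (ltnP p s.-1) => h1.
- have : p * d + (q - p) * d <= q * d by rewrite -mulnDl; rewrite leq_mul2r; lia.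
  have : q - p <= (q - p) * d by rewrite leq_pmulr.
  lia.
- lia.
- have [h3 h4] := hlast ltac:(lia).
  have : p * d + (s - 2 - p) * d <= (s - 2) * d by rewrite -mulnDl leq_mul2r; lia.
  have : s - 2 - p <= (s - 2 - p) * d by rewrite leq_pmulr.
  lia.
- lia.
Qed.

Lemma xpos_le p q : p <= q -> q < s -> xpos p <= xpos q.
Proof. by move=> h1 h2; have := xpos_mono h1 h2; lia. Qed.

Lemma xpos_inj p q : p < s -> q < s -> xpos p = xpos q -> p = q.
Proof.
move=> hp hq e; case: (ltngtP p q) => h //.
  by have := xpos_mono (ltnW h) hq; lia.
by have := xpos_mono (ltnW h) hp; lia.
Qed.

Lemma seg_facts t : t < N ->
  [/\ seg t < s, xpos (seg t) <= t,
      seg t = s.-1 -> t = xpos (seg t),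
      seg t < s.-1 -> t - xpos (seg t) <= s &
      seg t < s.-1 -> t < xpos (seg t).+1].
Proof.
move=> ht; rewrite /seg; case: eqP => htN.
  have hx : xpos s.-1 = N.-1 by rewrite /xpos ltnn.
  rewrite hx; split; lia.
have htd : t %/ d < s.-1 by rewrite ltn_divLR; lia.
have hx : xpos (t %/ d) = t %/ d * d by rewrite /xpos htd.
have hc : t < xpos (t %/ d).+1.
  rewrite /xpos; case: ifP => h; first exact: ltn_ceil.
  lia.
split.
- lia.
- by rewrite hx leq_trunc_div.
- lia.
- move=> _; rewrite hx.
  case: (ltnP (t %/ d).+1 s.-1) => h.
    have := ltn_ceil t hd1; lia.
  have [h3 h4] := hlast ltac:(lia).
  have e : t %/ d = s - 2 by lia.
  rewrite e; lia.
- by [].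
Qed.

Lemma sidx_prop t : t < N ->
  [/\ (sidx t).1 < s, (sidx t).2 < s & betw t (xpos (sidx t).1) (xpos (sidx t).2)].
Proof.
move=> ht; have [h1 h2 h3 h4 h5] := seg_facts ht.
rewrite /sidx /Iidx /betw; set p := seg t in h1 h2 h3 h4 h5 *; clearbody p.
case: eqP => hr0 /=.
  rewrite minnn maxnn; split => //; apply/andP; split => //; lia.
case: (leqP (t - xpos p) (s.-1 - p)) => hr /=.
  have hpr : p + (t - xpos p) < s by lia.
  have := xpos_mono (leq_addr (t - xpos p) p) hpr.
  rewrite addKn => hm.
  have : xpos p <= xpos (p + (t - xpos p)) by lia.
  move=> hle; rewrite (minn_idPl hle) (maxn_idPr hle); split => //; lia.
have hp1 : p < s.-1 by case: (ltnP p s.-1) => //; lia.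
have hr4 := h4 hp1.
have hi : t - xpos p - (s - p) <= p by lia.
have hle : xpos (t - xpos p - (s - p)) <= xpos p.+1.
  by apply: xpos_le; lia.
rewrite (minn_idPr hle) (maxn_idPl hle); split; try lia.
have := xpos_le hi ltac:(lia).
have := h5 hp1; lia.
Qed.

Lemma sidx_inj t1 t2 : t1 < N -> t2 < N -> sidx t1 = sidx t2 -> t1 = t2.
Proof.
move=> ht1 ht2; rewrite /sidx.
have [a1 a2 a3 a4 _] := seg_facts ht1.
have [b1 b2 b3 b4 _] := seg_facts ht2.
have hr1 : seg t1 = s.-1 -> t1 - xpos (seg t1) = 0 by move=> e; have := a3 e; lia.
have hr2 : seg t2 = s.-1 -> t2 - xpos (seg t2) = 0 by move=> e; have := b3 e; lia.
have hs1' : t1 - xpos (seg t1) <= s.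
  by case: (ltnP (seg t1) s.-1) => h; [exact: a4 | have := a3 ltac:(lia); lia].
have hs2' : t2 - xpos (seg t2) <= s.
  by case: (ltnP (seg t2) s.-1) => h; [exact: b4 | have := b3 ltac:(lia); lia].
move/(Iidx_inj a1 b1 hr1 hr2 hs1' hs2') => [e1 e2].
rewrite e1 in e2 a2; lia.
Qed.

Lemma spsi_inj t1 t2 : t1 < N -> t2 < N -> spsi t1 = spsi t2 -> t1 = t2.
Proof.
move=> ht1 ht2; rewrite /spsi => -[e1 e2].
have [a1 a2 _] := sidx_prop ht1; have [b1 b2 _] := sidx_prop ht2.
apply: sidx_inj => //.
case: (sidx t1) (sidx t2) a1 a2 b1 b2 e1 e2 => [i1 j1] [i2 j2] /= a1 a2 b1 b2 e1 e2.
by rewrite (xpos_inj a1 b1 e1) (xpos_inj a2 b2 e2).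
Qed.

Lemma spsi_prop t : t < N ->
  [/\ exists2 i, i < s & (spsi t).1 = xpos i, exists2 j, j < s & (spsi t).2 = xpos j,
      (spsi t).1 < N, (spsi t).2 < N & betw t (spsi t).1 (spsi t).2].
Proof.
move=> ht; have [h1 h2 h3] := sidx_prop ht; rewrite /spsi /=.
split => //; [by exists (sidx t).1 | by exists (sidx t).2 | exact: xpos_lt | exact: xpos_lt].
Qed.


End Scheme.

Definition scheme_ok s d N := 1 <= s /\ 1 <= d /\ d <= s.+1 /\ 1 <= N /\ N.-1 <= s.-1 * d /\
  (2 <= s -> (s - 2) * d < N.-1 /\ N.-1 - (s - 2) * d <= s.+1) /\ (s = 1 -> N = 1).

Lemma spsiW_prop s d N t : scheme_ok s d N -> t < N ->
  [/\ exists2 i, i < s & (spsi s d N t).1 = xpos s d N i,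
      exists2 j, j < s & (spsi s d N t).2 = xpos s d N j,
      (spsi s d N t).1 < N, (spsi s d N t).2 < N & betw t (spsi s d N t).1 (spsi s d N t).2].
Proof. by move=> [h1 [h2 [h3 [h4 [h5 [h6 h7]]]]]]; apply: (spsi_prop h1 h2 h3 h4 h5 h6 h7). Qed.

Lemma spsiW_inj s d N t1 t2 : scheme_ok s d N -> t1 < N -> t2 < N ->
  spsi s d N t1 = spsi s d N t2 -> t1 = t2.
Proof. by move=> [h1 [h2 [h3 [h4 [h5 [h6 h7]]]]]]; apply: (spsi_inj h1 h2 h3 h4 h5 h6 h7). Qed.

Lemma xposW_inj s d N p q : scheme_ok s d N -> p < s -> q < s ->
  xpos s d N p = xpos s d N q -> p = q.
Proof. by move=> [h1 [h2 [h3 [h4 [h5 [h6 h7]]]]]]; apply: (xpos_inj h1 h2 h3 h4 h5 h6 h7). Qed.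

Lemma xposW_lt s d N p : scheme_ok s d N -> p < s -> xpos s d N p < N.
Proof. by move=> [h1 [h2 [h3 [h4 [h5 [h6 h7]]]]]]; apply: (xpos_lt h1 h2 h3 h4 h5 h6 h7). Qed.

Lemma ek : forall k, 1 <= k -> (k ^ 2).-1 = k.-1 * k.+1.
Proof.
case => // k' _; rewrite -mulnn succnK.
have h : forall a, a.+1 * a.+1 = (a * a.+2).+1 by move=> a; rewrite !mulSn !mulnS; lia.
by rewrite h.
Qed.

Definition distn (i j : nat) := (i - j) + (j - i).

Section Grid.
Variables n0 m0 : nat.
Local Notation n := n0.+1.
Local Notation m := m0.+1.
Local Notation Vtx := ('I_n * 'I_m)%type.
Local Notation e := (cart_prod (path_graph n) (complete_graph m)).

Definition dist (x y : Vtx) : nat := distn x.1 y.1 + (x.2 != y.2).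

Lemma eE (x y : Vtx) : e x y = ((x.1 == y.1) && (x.2 != y.2)) ||
   ((x.2 == y.2) && ((x.1.+1 == y.1 :> nat) || (y.1.+1 == x.1 :> nat))).
Proof. by []. Qed.

Lemma dist_tri (x y z : Vtx) : dist x z <= dist x y + dist y z.
Proof.
rewrite /dist /distn.
move: (x.2) (y.2) (z.2) => a b c.
case: (a =P b) => [hab|/eqP hab]; case: (a =P c) => [hac|/eqP hac];
  case: (b =P c) => [hbc|/eqP hbc]; subst; rewrite ?eqxx ?hab ?hac ?hbc /=; try lia.
by rewrite eqxx in hac.
Qed.

Lemma dist_edge (x y : Vtx) : e x y -> dist x y <= 1.
Proof.
rewrite eE /dist /distn => /orP [/andP [/eqP -> _]|/andP [/eqP -> h]].
  by rewrite subnn; case: (_ != _).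
by rewrite eqxx /=; move: h => /orP [/eqP <-|/eqP <-]; lia.
Qed.

Lemma walk_lb (u : Vtx) p : path e u p -> dist u (last u p) <= size p.
Proof.
elim: p u => [|w p IH] u /=; first by rewrite /dist /distn subnn eqxx.
move=> /andP [huw hp].
have := dist_tri u w (last w p); have := dist_edge huw; have := IH _ hp.
move=> h1 h2 h3; apply: leq_trans h3 _; rewrite -[(size p).+1]add1n; exact: leq_add.
Qed.

Definition horiz (q : Vtx * Vtx) : bool := q.1.1 == q.2.1.

Lemma walk_lbH (u : Vtx) p : path e u p ->
  distn u.1 (last u p).1 + count horiz (zip (u :: p) p) <= size p.
Proof.
elim: p u => [|w p IH] u /=; first by rewrite /distn subnn.
move=> /andP [huw hp]; have := IH _ hp.
rewrite /horiz /=; move: huw; rewrite eE.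
move=> /orP [/andP [/eqP h _]|/andP [_ /orP [/eqP h|/eqP h]]].
  by rewrite h eqxx /= /distn; lia.
all: have hne : (u.1 == w.1) = false by apply/eqP => /(congr1 val) /=; lia.
all: rewrite hne /distn; lia.
Qed.

Lemma zip_split (u x y : Vtx) p : (x, y) \in zip (u :: p) p ->
  exists p1 p2, p = p1 ++ y :: p2 /\ last u p1 = x.
Proof.
elim: p u => [|w p IH] u //=; rewrite in_cons => /orP [/eqP [-> ->]|h].
  by exists [::], p.
have [p1 [p2 [-> <-]]] := IH _ h; by exists (w :: p1), p2.
Qed.

Lemma count2 (T : eqType) (P : pred T) (s : seq T) a b :
  a \in s -> b \in s -> a != b -> P a -> P b -> 2 <= count P s.
Proof.
move=> ha hb hab pa pb; rewrite -size_filter.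
have ha' : a \in filter P s by rewrite mem_filter pa ha.
have hb' : b \in filter P s by rewrite mem_filter pb hb.
case: (filter P s) ha' hb' => [|z [|z' s']] //=.
rewrite !inE => /eqP ha1 /eqP hb1; by rewrite ha1 hb1 eqxx in hab.
Qed.


Definition V (i a : nat) : Vtx := (inord i, inord a).

Lemma V_val (x : Vtx) : V x.1 x.2 = x.
Proof. by case: x => i a; rewrite /V /= !inord_val. Qed.

Lemma V1 i a : i < n -> (V i a).1 = i :> nat.
Proof. by move=> h; rewrite /= inordK. Qed.
Lemma V2 i a : a < m -> (V i a).2 = a :> nat.
Proof. by move=> h; rewrite /= inordK. Qed.

Lemma V_inj i a j b : i < n -> j < n -> a < m -> b < m -> V i a = V j b -> i = j /\ a = b.
Proof.
move=> hi hj ha hb h; split.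
  by rewrite -(V1 a hi) -(V1 b hj) h.
by rewrite -(V2 i ha) -(V2 j hb) h.
Qed.

Lemma e_vert i a : i.+1 < n -> a < m -> e (V i a) (V i.+1 a).
Proof.
move=> hi ha; rewrite eE; apply/orP; right; rewrite eqxx /=.
by rewrite !inordK // ?eqxx // ltnW.
Qed.

Lemma e_sym x y : e x y = e y x.
Proof.
rewrite !eE; congr orb; first by rewrite eq_sym [y.2 == _]eq_sym.
by rewrite eq_sym orbC.
Qed.

Lemma e_horiz t a b : t < n -> a < m -> b < m -> a != b -> e (V t a) (V t b).
Proof.
move=> ht ha hb hab; rewrite eE; apply/orP; left; rewrite eqxx /=.
apply/eqP => /(congr1 val); rewrite /= !inordK //; exact/eqP.
Qed.

Fixpoint vup (a i d : nat) : seq Vtx :=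
  if d is d'.+1 then V i.+1 a :: vup a i.+1 d' else [::].
Fixpoint vdown (a i d : nat) : seq Vtx :=
  if d is d'.+1 then V i.-1 a :: vdown a i.-1 d' else [::].

Lemma vup_prop a i d : a < m -> i + d < n ->
  [/\ path e (V i a) (vup a i d), last (V i a) (vup a i d) = V (i + d) a,
      size (vup a i d) = d &
      forall l, i <= l < i + d -> (V l a, V l.+1 a) \in zip (V i a :: vup a i d) (vup a i d)].
Proof.
move=> ha; elim: d i => [|d IH] i hid.
  by split=> //= [|l]; [rewrite addn0 | lia].
have hid' : i.+1 + d < n by lia.
have [h1 h2 h3 h4] := IH i.+1 hid'.
split=> /=.
- by rewrite h1 andbT e_vert //; lia.
- by rewrite h2 addSnnS.
- by rewrite h3.
- move=> l hl; rewrite in_cons; case: (eqVneq l i) => [->|hli]; first by rewrite eqxx.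
  move/eqP: hli => hli; by rewrite h4 ?orbT //; lia.
Qed.

Lemma vdown_prop a i d : a < m -> i < n -> d <= i ->
  [/\ path e (V i a) (vdown a i d), last (V i a) (vdown a i d) = V (i - d) a,
      size (vdown a i d) = d &
      forall l, i - d <= l < i -> (V l.+1 a, V l a) \in zip (V i a :: vdown a i d) (vdown a i d)].
Proof.
move=> ha; elim: d i => [|d IH] i hi hd.
  by split=> //= [|l]; [rewrite subn0 | lia].
have hi' : i.-1 < n by lia.
have hd' : d <= i.-1 by lia.
have [h1 h2 h3 h4] := IH i.-1 hi' hd'.
split=> /=.
- rewrite h1 andbT e_sym; have -> : i = i.-1.+1 by lia.
  rewrite /= e_vert //; lia.
- by rewrite h2; congr V; lia.
- by rewrite h3.
- move=> l hl; rewrite in_cons; case: (eqVneq l i.-1) => [->|hli].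
    by rewrite (_ : i.-1.+1 = i) ?eqxx //; lia.
  move/eqP: hli => hli; by rewrite h4 ?orbT //; lia.
Qed.

Lemma zip_catl (u x y : Vtx) p1 p2 : (x, y) \in zip (u :: p1) p1 ->
  (x, y) \in zip (u :: p1 ++ p2) (p1 ++ p2).
Proof.
elim: p1 u => [|w p IH] u //= ; rewrite !in_cons => /orP [->//|h].
by rewrite IH ?orbT.
Qed.

Lemma zip_catr (u x y : Vtx) p1 p2 : (x, y) \in zip (last u p1 :: p2) p2 ->
  (x, y) \in zip (u :: p1 ++ p2) (p1 ++ p2).
Proof.
elim: p1 u => [|w p IH] u //= h; rewrite in_cons IH ?orbT //.
Qed.

Definition vseg (a i j : nat) : seq Vtx :=
  if i <= j then vup a i (j - i) else vdown a i (i - j).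

Lemma vseg_prop a i j : a < m -> i < n -> j < n ->
  [/\ path e (V i a) (vseg a i j), last (V i a) (vseg a i j) = V j a,
      size (vseg a i j) = distn i j &
      forall l, minn i j <= l < maxn i j ->
        edge_on (V i a) (vseg a i j) (V l a) (V l.+1 a)].
Proof.
move=> ha hi hj; rewrite /vseg /edge_on /distn; case: ifP => hij.
  have hh : i + (j - i) < n by lia.
  have [h1 h2 h3 h4] := vup_prop ha hh.
  split=> //; first by rewrite h2; congr V; lia.
    by rewrite h3; lia.
  by move=> l hl; rewrite h4 //; lia.
have hh : i - j <= i by lia.
have [h1 h2 h3 h4] := vdown_prop ha hi hh.
split=> //; first by rewrite h2; congr V; lia.
  by rewrite h3; lia.
by move=> l hl; rewrite h4 ?orbT //; lia.
Qed.


Lemma edge_on_catl (u x y : Vtx) p1 p2 : edge_on u p1 x y -> edge_on u (p1 ++ p2) x y.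
Proof. by rewrite /edge_on => /orP [h|h]; apply/orP; [left|right]; apply: zip_catl. Qed.

Lemma edge_on_catr (u x y : Vtx) p1 p2 : edge_on (last u p1) p2 x y -> edge_on u (p1 ++ p2) x y.
Proof. by rewrite /edge_on => /orP [h|h]; apply/orP; [left|right]; apply: zip_catr. Qed.

Lemma edge_on_cons (u w x y : Vtx) p : edge_on w p x y -> edge_on u (w :: p) x y.
Proof.
rewrite /edge_on /= => /orP [h|h]; apply/orP; [left|right]; by rewrite in_cons h orbT.
Qed.

Lemma edge_on_sym (u x y : Vtx) p : edge_on u p x y = edge_on u p y x.
Proof. by rewrite /edge_on orbC. Qed.

Definition Pth (u v : Vtx) (t : nat) : seq Vtx :=
  if u.2 == v.2 then vseg v.2 u.1 v.1
  else vseg u.2 u.1 t ++ V t v.2 :: vseg v.2 t v.1.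

Lemma Pth_walk (u v : Vtx) t : betw t u.1 v.1 ->
  [/\ path e u (Pth u v t), last u (Pth u v t) = v & size (Pth u v t) = dist u v].
Proof.
move=> ht; have hu1 := ltn_ord u.1; have hu2 := ltn_ord u.2.
have hv1 := ltn_ord v.1; have hv2 := ltn_ord v.2.
rewrite /Pth /dist /betw in ht *; case: eqVneq => [h|h] /=.
  have [h1 h2 h3 _] := vseg_prop hv2 hu1 hv1.
  rewrite -[u in path e u _](V_val u) -[u in last u _](V_val u) h h1 h2 h3 V_val.
  by rewrite addn0.
have htn : t < n by lia.
have [h1 h2 h3 _] := vseg_prop hu2 hu1 htn.
have [h1' h2' h3' _] := vseg_prop hv2 htn hv1.
rewrite -[u in path e u _](V_val u) -[u in last u _](V_val u).
rewrite cat_path last_cat /= h1 h2 h1' h2' V_val size_cat /= h3 h3'.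
rewrite e_horiz //=.
split=> //; rewrite /distn; lia.
Qed.

Lemma Pth_short (u v : Vtx) t : betw t u.1 v.1 -> is_shortest_path e u v (Pth u v t).
Proof.
move=> ht; have [h1 h2 h3] := Pth_walk ht; split => // q [hq1 hq2].
by rewrite h3 -hq2; apply: walk_lb.
Qed.

Lemma Pth_cov_same (u v : Vtx) t l : u.2 = v.2 -> minn u.1 v.1 <= l < maxn u.1 v.1 ->
  edge_on u (Pth u v t) (V l u.2) (V l.+1 u.2).
Proof.
move=> h hl; rewrite /Pth h eqxx.
have [_ _ _ h4] := vseg_prop (ltn_ord v.2) (ltn_ord u.1) (ltn_ord v.1).
by rewrite -{1}(V_val u) h; apply: h4.
Qed.

Lemma Pth_cov_h (u v : Vtx) t : u.2 != v.2 -> betw t u.1 v.1 ->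
  edge_on u (Pth u v t) (V t u.2) (V t v.2).
Proof.
move=> h ht; rewrite /Pth (negbTE h); apply: edge_on_catr.
have htn : t < n by move: ht (ltn_ord u.1) (ltn_ord v.1); rewrite /betw; lia.
have [_ h2 _ _] := vseg_prop (ltn_ord u.2) (ltn_ord u.1) htn.
by rewrite -{1}(V_val u) h2 /edge_on /= in_cons eqxx.
Qed.

Lemma Pth_cov_l (u v : Vtx) t l : u.2 != v.2 -> betw t u.1 v.1 ->
  minn u.1 t <= l < maxn u.1 t -> edge_on u (Pth u v t) (V l u.2) (V l.+1 u.2).
Proof.
move=> h ht hl; rewrite /Pth (negbTE h); apply: edge_on_catl.
have htn : t < n by move: ht (ltn_ord u.1) (ltn_ord v.1); rewrite /betw; lia.
have [_ _ _ h4] := vseg_prop (ltn_ord u.2) (ltn_ord u.1) htn.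
by rewrite -{1}(V_val u); apply: h4.
Qed.

Lemma Pth_cov_r (u v : Vtx) t l : u.2 != v.2 -> betw t u.1 v.1 ->
  minn t v.1 <= l < maxn t v.1 -> edge_on u (Pth u v t) (V l v.2) (V l.+1 v.2).
Proof.
move=> h ht hl; rewrite /Pth (negbTE h); apply: edge_on_catr; apply: edge_on_cons.
have htn : t < n by move: ht (ltn_ord u.1) (ltn_ord v.1); rewrite /betw; lia.
have [_ _ _ h4] := vseg_prop (ltn_ord v.2) htn (ltn_ord v.1).
exact: h4.
Qed.


Lemma short_size (u v : Vtx) p : is_shortest_path e u v p -> size p = dist u v.
Proof.
move=> [[hp hl] hmin]; apply/eqP; rewrite eqn_leq; apply/andP; split.
  have hb : betw u.1 u.1 v.1 by rewrite /betw; lia.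
  have [h1 h2 h3] := Pth_walk hb; rewrite -h3; exact: hmin.
by rewrite -hl; apply: walk_lb.
Qed.

Lemma short_horiz (u v x y : Vtx) p : is_shortest_path e u v p ->
  (x, y) \in zip (u :: p) p -> x.1 = y.1 -> x.2 != y.2 -> u.2 = x.2 /\ v.2 = y.2.
Proof.
move=> hs hz hxy1 hxy2; have hsz := short_size hs.
move: hs => [[hp hl] _].
have [p1 [p2 [hpe hlx]]] := zip_split hz.
rewrite hpe cat_path last_cat hlx /= in hp hl; move/and3P: hp => [hp1 _ hp2].
have l1 := walk_lb hp1; rewrite hlx in l1.
have l2 := walk_lb hp2; rewrite hl in l2.
rewrite hpe size_cat /= in hsz.
have : dist u x + 1 + dist y v <= dist u v.
  rewrite -hsz addn1 addSn -addnS; exact: leq_add.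
rewrite /dist /distn hxy1.
move: (u.2) (x.2) (y.2) (v.2) hxy2 => a b c d.
case: (a =P b) => [->|/eqP hab]; case: (c =P d) => [->|/eqP hcd] //=; try lia.
Qed.

Lemma short_two (u v : Vtx) p z1 z2 : is_shortest_path e u v p ->
  z1 \in zip (u :: p) p -> z2 \in zip (u :: p) p -> horiz z1 -> horiz z2 -> z1 = z2.
Proof.
move=> hs h1 h2 hz1 hz2; have hsz := short_size hs.
move: hs => [[hp hl] _]; have := walk_lbH hp; rewrite hl hsz /dist.
case: (eqVneq z1 z2) => // hne.
have := count2 h1 h2 hne hz1 hz2.
by case: (u.2 != v.2) => /=; lia.
Qed.

Definition colset (S : {set Vtx}) (a : 'I_m) := [set x in S | x.2 == a].

Lemma lower_pair (S : {set Vtx}) (a b : 'I_m) : strong_edge_geodetic e S ->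
  a != b -> n <= #|colset S a| * #|colset S b|.
Proof.
move=> [f [hf1 hf2]] hab.
pose P (t : 'I_n) (q : Vtx * Vtx) := [&& q.1 \in S, q.2 \in S,
  enum_rank q.1 < enum_rank q.2 &
  (if f q.1 q.2 is Some p then edge_on q.1 p (t, a) (t, b) else false)].
pose u0 : Vtx := (ord0, ord0).
pose g t := odflt (u0, u0) [pick q | P t q].
have hg : forall t, P t (g t).
  move=> t; rewrite /g; case: pickP => [q hq //|hn].
  have he : e (t, a) (t, b) by rewrite eE eqxx hab.
  have [u [v [p [hu hv hr hf he']]]] := hf2 _ _ he.
  by move: (hn (u, v)); rewrite /P /= hu hv hr hf he'.
pose Pairs := [set q : Vtx * Vtx | [&& q.1 \in S, q.2 \in S,
  enum_rank q.1 < enum_rank q.2 &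
  ((q.1.2 == a) && (q.2.2 == b)) || ((q.1.2 == b) && (q.2.2 == a))]].
have hsh : forall t q p, P t q -> f q.1 q.2 = Some p -> is_shortest_path e q.1 q.2 p.
  move=> t q p /and4P [h1 h2 h3 _] hfp; exact: hf1 h1 h2 h3 hfp.
have hgP : forall t, g t \in Pairs.
  move=> t; have := hg t; rewrite /P inE.
  case hfq: (f (g t).1 (g t).2) => [p|]; last by rewrite !andbF.
  move=> /and4P [h1 h2 h3 h4]; rewrite h1 h2 h3 /=.
  have hs := hf1 _ _ _ h1 h2 h3 hfq.
  move: h4; rewrite /edge_on => /orP [hz|hz].
    by have [-> ->] := short_horiz hs hz erefl hab; rewrite !eqxx.
  have hba : b != a by rewrite eq_sym.
  by have [-> ->] := short_horiz hs hz erefl hba; rewrite !eqxx orbT.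
have ginj : injective g.
  move=> t1 t2 heq; have := hg t1; have := hg t2; rewrite /P -heq.
  case hfq: (f (g t1).1 (g t1).2) => [p|]; last by rewrite !andbF.
  move=> /and4P [h1 h2 h3 h4] /and4P [_ _ _ h5].
  have hs := hf1 _ _ _ h1 h2 h3 hfq.
  move: h4 h5; rewrite /edge_on => /orP [hz1|hz1] /orP [hz2|hz2];
    have := short_two hs hz1 hz2 (eqxx _) (eqxx _); by case => *.
have c1 : n <= #|Pairs|.
  have hc : #|g @: [set: 'I_n]| = n by rewrite card_imset // cardsT card_ord.
  rewrite -[X in X <= _]hc.
  apply: subset_leq_card; apply/subsetP => q /imsetP [t _ ->]; exact: hgP.
pose h (q : Vtx * Vtx) := if q.1.2 == a then q else (q.2, q.1).
have hinj : {in Pairs &, injective h}.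
  move=> q1 q2; rewrite !inE /h.
  move=> /and4P [_ _ r1 c1'] /and4P [_ _ r2 c2'].
  case: eqP => e1; case: eqP => e2 => heq //.
  - by move: r1 r2; rewrite heq /=; lia.
  - by move: r1 r2; rewrite -heq /=; lia.
  - by case: q1 q2 heq {r1 r2 c1' c2' e1 e2} => ? ? [? ?] [-> ->].
apply: leq_trans c1 _; rewrite -(card_in_imset hinj) -cardsX.
apply: subset_leq_card; apply/subsetP => q' /imsetP [q hq ->].
move: hq; rewrite inE => /and4P [h1 h2 _ /orP [/andP [/eqP e1 /eqP e2]|/andP [/eqP e1 /eqP e2]]].
  by rewrite /h e1 eqxx !inE /= h1 h2 e1 e2 !eqxx.
have hba : (b == a) = false by apply/negbTE; rewrite eq_sym.
by rewrite /h e1 hba !inE /= h1 h2 e1 e2 !eqxx.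
Qed.

Lemma card_cols (S : {set Vtx}) : #|S| = \sum_(a < m) #|colset S a|.
Proof.
rewrite -sum1_card (partition_big (fun x : Vtx => x.2) xpredT) //=.
by apply: eq_bigr => a _; rewrite sum1dep_card.
Qed.

Lemma lower_total (S : {set Vtx}) k h T : 3 <= m -> 1 <= k -> h <= 2 * k ->
  n = k ^ 2 + h ->
  (h = 0 -> T = m * k) -> (1 <= h <= k -> T = m * k + (m - 1)) ->
  (k.+1 <= h -> T = m * k + m) ->
  strong_edge_geodetic e S -> T <= #|S|.
Proof.
move=> hm hk hh hn T0 T1 T2 hS.
pose s a := #|colset S a|.
case: (@arg_minnP _ ord0 xpredT s isT) => c _ hc.
have hL : forall a, a != c -> Lf k h (s c) <= s a.
  move=> a hac; apply: Lbound => //; first exact: hc.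
  rewrite -hn; apply: lower_pair hS _; by rewrite eq_sym.
apply: leq_trans (target_le (s c) hm hk hh T0 T1 T2) _.
rewrite card_cols (bigD1 c) //= leq_add2l.
have hs : \sum_(a | a != c) Lf k h (s c) <= \sum_(a | a != c) s a.
  by apply: leq_sum => a hac; apply: hL.
apply: leq_trans hs.
by rewrite sum_nat_const cardC1 card_ord subn1 mulnC.
Qed.


Section Upper.
Variable pos : nat -> nat -> bool.
Variable psi : nat -> nat -> nat -> nat * nat.

Definition psi' a b t := if a < b then psi a b t else ((psi b a t).2, (psi b a t).1).

Hypothesis Hpsi : forall a b t, a < b -> b < m -> t < n ->
  [/\ pos a (psi a b t).1, pos b (psi a b t).2, (psi a b t).1 < n, (psi a b t).2 < n
    & betw t (psi a b t).1 (psi a b t).2].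
Hypothesis Hinj : forall a b t1 t2, a < b -> b < m -> t1 < n -> t2 < n ->
  psi a b t1 = psi a b t2 -> t1 = t2.
Hypothesis Hvert : forall a l, a < m -> l.+1 < n ->
  (exists x y, [/\ pos a x, pos a y, x < n, y < n & x <= l < y]) \/
  (exists b t, [/\ b < m, a != b, t < n &
     minn (psi' a b t).1 t <= l < maxn (psi' a b t).1 t]).

Lemma Hpsi' a b t : a < m -> b < m -> a != b -> t < n ->
  [/\ pos a (psi' a b t).1, pos b (psi' a b t).2, (psi' a b t).1 < n, (psi' a b t).2 < n
    & betw t (psi' a b t).1 (psi' a b t).2].
Proof.
move=> ha hb hab ht; rewrite /psi'; case: ltnP => h.
  exact: Hpsi.
have hba : b < a by rewrite ltn_neqAle eq_sym hab.
have [h1 h2 h3 h4 h5] := Hpsi hba ha ht.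
by split => //=; move: h5; rewrite /betw minnC maxnC.
Qed.

Lemma Hinj' a b t1 t2 : a < m -> b < m -> a != b -> t1 < n -> t2 < n ->
  psi' a b t1 = psi' a b t2 -> t1 = t2.
Proof.
move=> ha hb hab h1 h2; rewrite /psi'; case: ltnP => h.
  exact: Hinj.
have hba : b < a by rewrite ltn_neqAle eq_sym hab.
move=> [e1 e2]; apply: (Hinj hba ha h1 h2).
by move: e1 e2; case: (psi b a t1) => ? ?; case: (psi b a t2) => ? ? /= -> ->.
Qed.

Lemma psi'_swap a b t : a != b -> psi' b a t = ((psi' a b t).2, (psi' a b t).1).
Proof.
move=> hab; rewrite /psi'; case: (ltngtP a b) => h.
- by [].
- by case: (psi b a t).
- by rewrite h eqxx in hab.
Qed.

Definition Sset : {set Vtx} := [set x : Vtx | pos x.2 x.1].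

Definition tau (u v : Vtx) : 'I_n :=
  odflt u.1 [pick t : 'I_n | (u.2 != v.2) && (psi' u.2 v.2 t == (val u.1, val v.1))].

Definition fS (u v : Vtx) : option (seq Vtx) := Some (Pth u v (tau u v)).

Lemma tau_betw u v : betw (tau u v) u.1 v.1.
Proof.
rewrite /tau; case: pickP => [t /andP [h1 /eqP h2]|_] /=; last by rewrite /betw; lia.
have := Hpsi' (ltn_ord u.2) (ltn_ord v.2) h1 (ltn_ord t).
by rewrite h2 => -[].
Qed.

Lemma tau_eq a b t : a < m -> b < m -> a != b -> t < n ->
  tau (V (psi' a b t).1 a) (V (psi' a b t).2 b) = t :> nat.
Proof.
move=> ha hb hab ht; have [h1 h2 h3 h4 h5] := Hpsi' ha hb hab ht.
rewrite /tau /= !inordK //; case: pickP => [t' /andP [_ /eqP ht']|hn] /=.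
  apply: (Hinj' ha hb hab (ltn_ord t') ht); rewrite ht'.
  by case: (psi' a b t).
have hab' : (inord a : 'I_m) != inord b.
  by apply/eqP => /(congr1 val) /=; rewrite !inordK //; apply/eqP.
by move: (hn (Ordinal ht)); rewrite hab' /=; case: (psi' a b t) => ? ?; rewrite eqxx.
Qed.

Lemma cov_pair (u v X Y : Vtx) : u \in Sset -> v \in Sset -> u != v ->
  edge_on u (Pth u v (tau u v)) X Y -> edge_on v (Pth v u (tau v u)) X Y ->
  exists u' v' p, [/\ u' \in Sset, v' \in Sset, enum_rank u' < enum_rank v',
                     fS u' v' = Some p & edge_on u' p X Y].
Proof.
move=> hu hv huv h1 h2.
have hr : enum_rank u != enum_rank v.
  by apply: contra huv => /eqP /enum_rank_inj ->.
case: (ltngtP (enum_rank u) (enum_rank v)) => hc.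
- by exists u, v, (Pth u v (tau u v)).
- by exists v, u, (Pth v u (tau v u)).
- by move/val_inj: hc => hc; rewrite hc eqxx in hr.
Qed.

Lemma inS x a : x < n -> a < m -> (V x a \in Sset) = pos a x.
Proof. by move=> hx ha; rewrite inE /= !inordK. Qed.

Definition goalE (X Y : Vtx) := exists u' v' p, [/\ u' \in Sset, v' \in Sset,
  enum_rank u' < enum_rank v', fS u' v' = Some p & edge_on u' p X Y].

Lemma goalE_sym X Y : goalE X Y -> goalE Y X.
Proof. by move=> [u [v [p [h1 h2 h3 h4 h5]]]]; exists u, v, p; rewrite edge_on_sym. Qed.

Lemma vert_cov l a : l.+1 < n -> a < m -> goalE (V l a) (V l.+1 a).
Proof.
move=> hl ha; case: (Hvert ha hl) => [[x [y [hx hy hxn hyn hxy]]]|[b [t [hb hab ht hlt]]]].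
  apply: (@cov_pair (V x a) (V y a)).
  + by rewrite inS.
  + by rewrite inS.
  + apply/eqP => /V_inj [] // hxy' _; move: hxy; rewrite hxy'; lia.
  + have := Pth_cov_same (u := V x a) (v := V y a) (tau (V x a) (V y a)) (l := l).
    rewrite /= !inordK //; apply => //; lia.
  + have := Pth_cov_same (u := V y a) (v := V x a) (tau (V y a) (V x a)) (l := l).
    rewrite /= !inordK //; apply => //; lia.
have [h1 h2 h3 h4 h5] := Hpsi' ha hb hab ht.
set x := (psi' a b t).1 in h1 h3 h5 hlt; set y := (psi' a b t).2 in h2 h4 h5.
have hne : (V x a).2 != (V y b).2.
  by apply/eqP => /(congr1 val) /=; rewrite !inordK //; apply/eqP.
apply: (@cov_pair (V x a) (V y b)).
+ by rewrite inS.
+ by rewrite inS.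
+ by apply: contra hne => /eqP ->.
+ have -> : tau (V x a) (V y b) = Ordinal ht by apply: val_inj; exact: tau_eq.
  have := Pth_cov_l (t := t) (l := l) hne; rewrite /= !inordK //; apply => //.
+ have hba : b != a by rewrite eq_sym.
  have hsw := psi'_swap t hab.
  have -> : tau (V y b) (V x a) = Ordinal ht.
    apply: val_inj; have := tau_eq hb ha hba ht; by rewrite hsw.
  have hne' : (V y b).2 != (V x a).2 by rewrite eq_sym.
  have := Pth_cov_r (t := t) (l := l) hne'; rewrite /= !inordK //; apply.
    by move: h5; rewrite /betw minnC maxnC.
  by rewrite minnC maxnC.
Qed.

Theorem upper_geodetic : strong_edge_geodetic e Sset.
Proof.
exists fS; split.
  by move=> u v p _ _ _ [<-]; apply: Pth_short; apply: tau_betw.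
move=> X Y; rewrite eE => /orP [/andP [/eqP hxy hne]|/andP [/eqP hxy hv]].
-
  set t := val X.1; set a := val X.2; set b := val Y.2.
  have ht : t < n by exact: ltn_ord.
  have ha : a < m by exact: ltn_ord. have hb : b < m by exact: ltn_ord.
  have hab : a != b by exact: hne.
  have [h1 h2 h3 h4 h5] := Hpsi' ha hb hab ht.
  set x := (psi' a b t).1 in h1 h3 h5; set y := (psi' a b t).2 in h2 h4 h5.
  have hX : X = V t a by rewrite -[X]V_val.
  have hY : Y = V t b by rewrite -[Y]V_val -hxy.
  apply: (@cov_pair (V x a) (V y b)).
  + by rewrite inS.
  + by rewrite inS.
  + apply/eqP => /V_inj [] // _ hab'; by rewrite hab' eqxx in hab.
  + have -> : tau (V x a) (V y b) = Ordinal ht by apply: val_inj; exact: tau_eq.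
    have hne' : (V x a).2 != (V y b).2.
      by apply/eqP => /(congr1 val); rewrite /= !inordK //; apply/eqP.
    have := Pth_cov_h (t := t) hne'; rewrite /= !inordK // => H.
    by rewrite hX hY; apply: H.
  + have hba : b != a by rewrite eq_sym.
    have hsw := psi'_swap t hab.
    have -> : tau (V y b) (V x a) = Ordinal ht.
      apply: val_inj; have := tau_eq hb ha hba ht; by rewrite hsw.
    have hne' : (V y b).2 != (V x a).2.
      by apply/eqP => /(congr1 val); rewrite /= !inordK //; apply/eqP.
    have := Pth_cov_h (t := t) hne'; rewrite /= !inordK // => H.
    rewrite hX hY edge_on_sym; apply: H.
    by move: h5; rewrite /betw minnC maxnC.
-
  move: hv => /orP [/eqP h|/eqP h].
    have ha : X.2 < m by exact: ltn_ord.
    have hl : X.1.+1 < n by rewrite h; exact: ltn_ord.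
    have eY : V X.1.+1 X.2 = Y by rewrite h hxy V_val.
    have := vert_cov hl ha; rewrite eY V_val; exact.
  have ha : Y.2 < m by exact: ltn_ord.
  have hl : Y.1.+1 < n by rewrite h; exact: ltn_ord.
  have eX : V Y.1.+1 Y.2 = X by rewrite h -hxy V_val.
  apply: goalE_sym; have := vert_cov hl ha; rewrite eX V_val; exact.
Qed.

End Upper.


Lemma card_ordset (s : seq nat) : uniq s -> (forall x, x \in s -> x < n) ->
  #|[set i : 'I_n | val i \in s]| = size s.
Proof.
move=> us hs; rewrite cardE -(size_map val); apply: perm_size; apply: uniq_perm => //.
  by rewrite map_inj_uniq ?enum_uniq //; exact: val_inj.
move=> x; apply/mapP/idP => [[i]|hx].
  by rewrite mem_enum inE => hi ->.
by exists (Ordinal (hs x hx)); rewrite // mem_enum inE.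
Qed.

Lemma card_Sset (pl : nat -> seq nat) : (forall a, uniq (pl a)) ->
  (forall a x, x \in pl a -> x < n) ->
  #|Sset (fun a l => l \in pl a)| = \sum_(a < m) size (pl a).
Proof.
move=> hu hl; rewrite card_cols; apply: eq_bigr => a _.
have -> : colset (Sset (fun a l => l \in pl a)) a =
          (fun i : 'I_n => (i, a)) @: [set i : 'I_n | val i \in pl a].
  apply/setP => -[i b]; rewrite !inE /=; apply/andP/imsetP.
    move=> [h1 /eqP e]; exists i; rewrite ?inE -?e //.
  move=> [j hj [e1 e2]]; rewrite inE in hj; rewrite e1 e2; split => //.
rewrite card_imset; first by apply: card_ordset => // x; apply: hl.
by move=> i j [].
Qed.



Lemma pl_uniq s d N : scheme_ok s d N -> uniq [seq xpos s d N p | p <- iota 0 s].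
Proof.
move=> hok; rewrite map_inj_in_uniq ?iota_uniq //.
move=> p q; rewrite !mem_iota !add0n => hp hq; exact: xposW_inj.
Qed.

Lemma pl_lt s d N x : scheme_ok s d N -> x \in [seq xpos s d N p | p <- iota 0 s] -> x < N.
Proof. by move=> hok /mapP [p]; rewrite mem_iota add0n => hp ->; apply: xposW_lt. Qed.

Lemma pl_mem s d N i : i < s -> xpos s d N i \in [seq xpos s d N p | p <- iota 0 s].
Proof. by move=> hi; apply: map_f; rewrite mem_iota add0n. Qed.


Lemma uniform_case s d : scheme_ok s d n -> 2 <= s ->
  exists S : {set Vtx}, strong_edge_geodetic e S /\ #|S| = m * s.
Proof.
move=> hok hs2.
pose pl (a : nat) := [seq xpos s d n p | p <- iota 0 s].
pose psi (a b t : nat) := spsi s d n t.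
exists (Sset (fun a l => l \in pl a)); split.
- apply: (@upper_geodetic _ psi).
  + move=> a b t hab hb ht.
    have [[i hi e1] [j hj e2] h3 h4 h5] := spsiW_prop hok ht.
    by split => //; rewrite /pl /psi ?e1 ?e2; apply: pl_mem.
  + by move=> a b t1 t2 _ _ h1 h2; exact: (spsiW_inj hok h1 h2).
  + move=> a l ha hl; left; exists (xpos s d n 0), (xpos s d n s.-1).
    split; try (apply: pl_mem; lia); try (apply: xposW_lt => //; lia).
    rewrite /xpos ltnn; have -> : 0 < s.-1 by lia.
    rewrite mul0n; lia.
- rewrite card_Sset.
  + rewrite (eq_bigr (fun _ => s)) => [|a _]; last by rewrite size_map size_iota.
    by rewrite sum_nat_const card_ord.
  + by move=> a; apply: pl_uniq.
  + by move=> a x; apply: pl_lt.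
Qed.


Lemma mixed_case k h : 1 <= k -> 1 <= h <= k -> n = k ^ 2 + h -> 1 <= m0 ->
  exists S : {set Vtx}, strong_edge_geodetic e S /\ #|S| = m * k + (m - 1).
Proof.
move=> hk hh hn hm.
have okY : scheme_ok k k.+1 (k ^ 2).
  rewrite /scheme_ok; do 6 (split; first nia); nia.
have okX : scheme_ok k.+1 k.+1 n.
  rewrite /scheme_ok hn; do 6 (split; first nia); nia.
pose xY := xpos k k.+1 (k ^ 2); pose xX := xpos k.+1 k.+1 n.
have xYX : forall i, i < k -> xY i = xX i.
  move=> i hi; rewrite /xY /xX /xpos /=; rewrite hi.
  case: ltnP => h1 //; have -> : i = k.-1 by lia.
  exact: ek.
have xXk : xX k = n0 by rewrite /xX /xpos /= ltnn.
have xY0 : 2 <= k -> xY 0 = 0 by move=> h2; rewrite /xY /xpos; case: ifP => //; lia.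
have xYk : xY k.-1 = (k ^ 2).-1 by rewrite /xY /xpos ltnn.
have xX0 : xX 0 = 0 by rewrite /xX /xpos /=; case: ifP => //; lia.
pose plY := [seq xY p | p <- iota 0 k]; pose plX := [seq xX p | p <- iota 0 k.+1].
pose pl (a : nat) := if a == 0 then plY else plX.
pose psi (a b t : nat) := if a == 0 then
    (if t < k ^ 2 then spsi k k.+1 (k ^ 2) t else ((t - k ^ 2) * k.+1, n0))
  else spsi k.+1 k.+1 n t.
have memYX : forall i, i < k -> xY i \in plX.
  by move=> i hi; rewrite xYX //; apply: pl_mem; lia.
have hq : forall q, q < k -> q * k.+1 = xY q.
  move=> q hq; rewrite xYX // /xX /xpos; by case: ifP => //; lia.
exists (Sset (fun a l => l \in pl a)); split.
- apply: (@upper_geodetic _ psi).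
  + move=> a b t hab hb ht; rewrite /pl /psi.
    have -> : (b == 0) = false by lia.
    case: (eqVneq a 0) => [ha0|ha0] /=.
      case: ifP => htk.
        have [[i hi e1] [j hj e2] h3 h4 h5] := spsiW_prop okY htk.
        rewrite e1 e2; split => //; try (apply: pl_mem; lia); try lia.
          by apply: memYX.
        by rewrite -e1 -e2.
      have hqk : t - k ^ 2 < k by lia.
      rewrite hq //; split => //.
      * exact: pl_mem.
      * by rewrite -xXk; apply: pl_mem.
      * have := xposW_lt okY hqk; rewrite -/xY /=; lia.
      * rewrite -(hq _ hqk) /betw /=.
        have : (t - k ^ 2) * k.+1 <= k.-1 * k.+1 by rewrite leq_mul2r; lia.
        rewrite -ek //; lia.
    have ha : a != 0 by [].
    have [[i hi e1] [j hj e2] h3 h4 h5] := spsiW_prop okX ht.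
    rewrite /= in e1 e2 h3 h4 h5.
    rewrite e1 e2; split => //; try (apply: pl_mem; lia); try lia.
    by rewrite -e1 -e2.
  + move=> a b t1 t2 hab hb h1 h2; rewrite /psi.
    case: (eqVneq a 0) => [ha0|ha0] /=; last exact: spsiW_inj.
    case: ifP => ht1; case: ifP => ht2.
    * exact: spsiW_inj.
    * have [_ [j hj e2] _ h4 _] := spsiW_prop okY ht1.
      move=> e; have := h4; rewrite e /=; lia.
    * have [_ [j hj e2] _ h4 _] := spsiW_prop okY ht2.
      move=> e; have := h4; rewrite -e /=; lia.
    * move=> [e]; have : t1 - k ^ 2 = t2 - k ^ 2.
        by apply/eqP; rewrite -(eqn_pmul2r (ltn0Sn k)) e.
      lia.
  + move=> a l ha hl; rewrite /pl.
    case: (eqVneq a 0) => [ha0|ha0] /=.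
      case: (ltnP l (k ^ 2).-1) => hlk.
        have k2 : 2 <= k by nia.
        left; exists (xY 0), (xY k.-1).
        split; [apply: pl_mem; lia | apply: pl_mem; lia | rewrite xY0 //; lia
               | rewrite xYk; lia | rewrite xY0 // xYk; lia].
      right; exists 1, n0; split => //; first by rewrite ha0.
      rewrite ha0 /psi' /psi /=.
      have -> : (n0 < k ^ 2) = false by lia.
      have : (n0 - k ^ 2) * k.+1 <= k.-1 * k.+1 by rewrite leq_mul2r; lia.
      rewrite -ek //= => hx; lia.
    left; exists (xX 0), (xX k); rewrite xX0 xXk; split; try lia.
    * by rewrite -xX0; apply: pl_mem.
    * by rewrite -xXk; apply: pl_mem.
- rewrite card_Sset.
  + rewrite big_ord_recl /pl /= /plY !size_map !size_iota.
    rewrite sum_nat_const card_ord; lia.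
  + by move=> a; rewrite /pl; case: ifP => _; apply: pl_uniq.
  + move=> a x; rewrite /pl; case: ifP => _ hx; [have := pl_lt okY hx | have := pl_lt okX hx]; lia.
Qed.
End Grid.

Lemma part1 (m n k : nat) : 3 <= m -> 2 <= n -> 1 <= k ->
     k ^ 2 <= n -> n < k.+1 ^ 2 ->
     let h := n - k ^ 2 in
     [/\ h = 0 ->
           sge_number (cart_prod (path_graph n) (complete_graph m)) (m * k),
         1 <= h <= k ->
           sge_number (cart_prod (path_graph n) (complete_graph m))
             (m * k + (m - 1))
       & k.+1 <= h <= 2 * k ->
           sge_number (cart_prod (path_graph n) (complete_graph m))
             (m * k + m)].
Proof.
case: m => [//|m0]; case: n => [//|n0] hm hn hk h1 h2 h.
have hn' : n0.+1 = k ^ 2 + h by rewrite /h; lia.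
have hh : h <= 2 * k by rewrite /h; move: h2; rewrite -!mulnn; nia.
clearbody h.
split.
- move=> h0; split.
  + have ok : scheme_ok k k.+1 n0.+1.
      rewrite /scheme_ok hn' h0; do 6 (split; first nia); nia.
    have k2 : 2 <= k by move: hn; rewrite hn' h0; nia.
    exact: (@uniform_case n0 m0 k k.+1 ok k2).
  + move=> S hS; apply: (lower_total (k := k) (h := h)) hS => //; lia.
- move=> hr; split.
  + apply: (@mixed_case n0 m0 k h) => //; lia.
  + move=> S hS; apply: (lower_total (k := k) (h := h)) hS => //; lia.
- move=> hr; split.
  + have ok : scheme_ok k.+1 k.+2 n0.+1.
      rewrite /scheme_ok hn'; do 6 (split; first nia); nia.
    have [S [hS hc]] := @uniform_case n0 m0 k.+1 k.+2 ok ltac:(lia).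
    by exists S; rewrite hc mulnS addnC.
  + move=> S hS; apply: (lower_total (k := k) (h := h)) hS => //; lia.
Qed.

Theorem mainTheorem12 :
  (forall m n k : nat, 3 <= m -> 2 <= n -> 1 <= k ->
     k ^ 2 <= n -> n < k.+1 ^ 2 ->
     let h := n - k ^ 2 in
     [/\ h = 0 ->
           sge_number (cart_prod (path_graph n) (complete_graph m)) (m * k),
         1 <= h <= k ->
           sge_number (cart_prod (path_graph n) (complete_graph m))
             (m * k + (m - 1))
       & k.+1 <= h <= 2 * k ->
           sge_number (cart_prod (path_graph n) (complete_graph m))
             (m * k + m)]) /\
  (forall m : nat, 3 <= m ->
     sge_number (cart_prod (path_graph 2) (complete_graph m)) (2 * m - 1)).
Proof.
split; first exact: part1.
move=> m hm; have [_ H _] := @part1 m 2 1 hm isT isT isT isT.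
have -> : 2 * m - 1 = m * 1 + (m - 1) by lia.
exact: H.
Qed.
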